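(* Let $\{M_i\}_{i\in I}$ be a family of complete pointed metric spaces, let $M=\coprod_{i\in I}M_i$ be their metric sum, and let $Y$ be a real Banach space. Then the following are equivalent: (a) $\mathrm{A}(M_i,Y)$ is dense in $\mathrm{Lip}_0(M_i,Y)$ for every $i\in I$; (b) $\mathrm{A}(M,Y)$ is dense in $\mathrm{Lip}_0(M,Y)$.
   Context: Throughout, metric spaces are complete and pointed, with base point $0$. $\mathrm{Lip}_0(M,Y)$ is the Banach space of Lipschitz maps $f:M\to Y$ with $f(0)=0$, normed by $\|f\|=\sup_{p\neq q}\|f(p)-f(q)\|/d(p,q)$. A map $f$ attains its norm toward $y\in Y$ if there is a sequence $(p_n,q_n)$ in $M\times M$ with $p_n\neq q_n$ such that $[f(p_n)-f(q_n)]/d(p_n,q_n)\to y$ and $\|y\|=\|f\|$; $\mathrm{A}(M,Y)$ is the set of $f$ attaining their norm toward some vector. The metric sum $\coprod_{i\in I}M_i$ of pointed metric spaces $(M_i,d_i)$ is the disjoint union of the $M_i$ with all base points identified to a single base point $0$, with metric $d(p,q)=d_i(p,q)$ if $p,q\in M_i$, and $d(p,q)=d_i(p,0)+d_j(0,q)$ if $p\in M_i$, $q\in M_j$, $i\neq j$. *)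

(* Defs.v *)
From HB Require Import structures.
From mathcomp Require Import all_boot all_order all_algebra.
From mathcomp Require Import all_classical all_reals all_analysis.
From mathcomp Require Import Rstruct.
From Stdlib Require Rdefinitions.
Set Implicit Arguments. Unset Strict Implicit. Unset Printing Implicit Defensive.
Import Order.TTheory GRing.Theory Num.Theory.
Import numFieldNormedType.Exports.
Local Open Scope classical_set_scope.
Local Open Scope ring_scope.

Notation RR := Rdefinitions.R.

Definition is_metric (T : Type) (d : T -> T -> RR) : Prop :=
  (forall x y, 0 <= d x y) /\
  (forall x y, d x y = 0 <-> x = y) /\
  (forall x y, d x y = d y x) /\
  (forall x y z, d x z <= d x y + d y z).

Definition d_cauchy (T : Type) (d : T -> T -> RR) (u : nat -> T) : Prop :=
  forall eps : RR, 0 < eps -> exists N : nat,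
    forall m n : nat, (N <= m)%N -> (N <= n)%N -> d (u m) (u n) < eps.

Definition d_converges (T : Type) (d : T -> T -> RR) (u : nat -> T) (x : T) : Prop :=
  forall eps : RR, 0 < eps -> exists N : nat,
    forall n : nat, (N <= n)%N -> d (u n) x < eps.

Definition is_complete (T : Type) (d : T -> T -> RR) : Prop :=
  forall u : nat -> T, d_cauchy d u -> exists x, d_converges d u x.

Section Lip.
Variables (T : Type) (d : T -> T -> RR) (t0 : T) (Y : normedModType RR).

Definition Lip0 (f : T -> Y) : Prop :=
  f t0 = 0 /\ exists L : RR, forall p q, `|f p - f q| <= L * d p q.

Definition lipnorm (f : T -> Y) : RR :=
  sup [set r : RR | exists p q, p <> q /\ r = `|f p - f q| / d p q].

Definition attains_norm_toward (f : T -> Y) (y : Y) : Prop :=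
  exists (p q : nat -> T),
    (forall n, p n <> q n) /\
    ((fun n => (d (p n) (q n))^-1 *: (f (p n) - f (q n))) @ \oo --> y) /\
    `|y| = lipnorm f.

Definition NA (f : T -> Y) : Prop :=
  Lip0 f /\ exists y : Y, attains_norm_toward f y.

Definition NA_dense : Prop :=
  forall f : T -> Y, Lip0 f ->
    forall eps : RR, 0 < eps -> exists g : T -> Y, NA g /\ lipnorm (f - g) < eps.

End Lip.

Section MetricSum.
Variables (I : Type) (M : I -> Type) (d : forall i, M i -> M i -> RR)
          (base : forall i, M i).

Definition nonbase := {x : {i : I & M i} | projT2 x <> base (projT1 x)}.

(* carrier of the metric sum: [None] is the common base point *)
Definition msum := option nonbase.

Definition msum_base : msum := None.

Definition msum_dist (p q : msum) : RR :=
  match p, q with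
  | None, None => 0
  | Some x, None => d (projT2 (sval x)) (base (projT1 (sval x)))
  | None, Some y => d (base (projT1 (sval y))) (projT2 (sval y))
  | Some x, Some y =>
      let i := projT1 (sval x) in let j := projT1 (sval y) in
      match pselect (i = j) with
      | left e => d (eq_rect i M (projT2 (sval x)) j e) (projT2 (sval y))
      | right _ => d (projT2 (sval x)) (base i) + d (base j) (projT2 (sval y))
      end
  end.

End MetricSum.

Arguments msum_dist {I M} d base p q.
Arguments msum_base {I M} base.

(* Main.v *)
Require Import Defs.
From HB Require Import structures.
From mathcomp Require Import all_boot all_order all_algebra.
From mathcomp Require Import all_classical all_reals all_analysis.
From mathcomp Require Import Rstruct.
Import Order.TTheory GRing.Theory Num.Theory.
Import numFieldNormedType.Exports.
Local Open Scope classical_set_scope.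
Local Open Scope ring_scope.
Set Implicit Arguments. Unset Strict Implicit. Unset Printing Implicit Defensive.
From mathcomp Require Import ring lra.
Lemma ar1 (N eps u v a : RR) : N - eps / 4 < u -> v < eps / 4 -> u <= a + v -> N - 2 * (eps / 4) < a.
Proof. move=> *; lra. Qed.
Lemma ar_contra (N x : RR) : 0 < x -> N <= N - x -> False.
Proof. move=> *; lra. Qed.
Lemma ar2 (eps N : RR) : 0 < eps -> eps <= N -> 0 <= N - 2 * (eps / 4).
Proof. move=> *; lra. Qed.
Lemma ar3 (x y : RR) : x - (x - y) = y.
Proof. lra. Qed.
Lemma ar4 (x : RR) : 0 < x -> 0 <= 2 * x.
Proof. move=> *; lra. Qed.
Lemma ar5 (x y : RR) : 0 < y -> x < y -> x <= 2 * y.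
Proof. move=> *; lra. Qed.
Lemma ar6 (eps : RR) : 0 < eps -> 2 * (eps / 4) < eps.
Proof. move=> *; lra. Qed.
Lemma ar7 (eps lf lF N e : RR) : 0 < eps -> eps <= lf -> lf <= lF -> lF <= N + e -> e < eps / 3 -> e < N.
Proof. move=> *; lra. Qed.
Lemma ar8 (N e U X W : RR) : e < N -> 0 <= e -> U <= e -> W <= N -> X <= U + W ->
  X <= (N + e) / (N - e) * (N - U).
Proof.
move=> h1 h2 h3 h4 h5.
have Ne : 0 < N - e by lra.
apply: le_trans (_ : (N + e) / (N - e) * (N - e) <= _).
  by rewrite divfK ?lt0r_neq0 //; lra.
by apply: ler_wpM2l; [apply: divr_ge0; lra | lra].
Qed.
Lemma ar9 (Cc A B X Z e : RR) : 0 <= Cc -> X <= A + B -> B <= Cc * Z -> Z <= A ->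
  A < e / (1 + Cc) -> X < e.
Proof.
move=> h0 h1 h2 h3 h4.
have C1 : 0 < 1 + Cc by lra.
have : A * (1 + Cc) < e by rewrite -ltr_pdivlMr.
have : Cc * Z <= Cc * A by apply: ler_wpM2l.
nra.
Qed.
Lemma ar10 (e : RR) : 0 < e -> e / 3 < e.
Proof. move=> *; lra. Qed.
Lemma ar11 (y l : RR) : l < y -> 0 < y - l.
Proof. move=> *; lra. Qed.
Lemma ar12 (y l w r : RR) : y - w <= r -> w <= l -> r < y - l -> False.
Proof. move=> *; lra. Qed.
Section Gen.
Variables (T : Type) (d : T -> T -> RR) (Y : normedModType RR).
Hypothesis hd0 : forall p q, 0 <= d p q.
Hypothesis hdp : forall p q, p <> q -> 0 < d p q.
Hypothesis hex : exists p q : T, p <> q.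

Definition Lipb (f : T -> Y) := exists L : RR, forall p q, `|f p - f q| <= L * d p q.

Lemma lip_le (f : T -> Y) c : (forall p q, `|f p - f q| <= c * d p q) ->
  lipnorm d f <= c.
Proof.
move=> H; apply: ge_sup.
  by case: hex => p [q pq]; exists (`|f p - f q| / d p q); exists p, q.
move=> r [p [q [pq ->]]]; rewrite ler_pdivrMr; last exact: hdp.
exact: H.
Qed.

Lemma lip_has_sup (f : T -> Y) : Lipb f ->
  has_sup [set r : RR | exists p q, p <> q /\ r = `|f p - f q| / d p q].
Proof.
case=> L HL; split.
  by case: hex => p [q pq]; exists (`|f p - f q| / d p q); exists p, q.
exists L => r [p [q [pq ->]]]; rewrite ler_pdivrMr; last exact: hdp.
exact: HL.
Qed.

Lemma lip_ge0 (f : T -> Y) : Lipb f -> 0 <= lipnorm d f.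
Proof.
move=> Hf; case: hex => p [q pq].
have H := sup_upper_bound (lip_has_sup Hf).
apply: le_trans (H (`|f p - f q| / d p q) _); last by exists p, q.
by rewrite divr_ge0.
Qed.

Lemma lip_bound (f : T -> Y) : Lipb f ->
  forall p q, `|f p - f q| <= lipnorm d f * d p q.
Proof.
move=> Hf p q; have [->|pq] := pselect (p = q).
  by rewrite subrr normr0 mulr_ge0 // (lip_ge0 Hf).
rewrite -ler_pdivrMr; last exact: hdp.
by apply: (sup_upper_bound (lip_has_sup Hf)); exists p, q.
Qed.


Lemma lipbD (f g : T -> Y) : Lipb f -> Lipb g -> Lipb (fun p => f p + g p).
Proof.
move=> Hf Hg; exists (lipnorm d f + lipnorm d g) => p q.
have -> : f p + g p - (f q + g q) = (f p - f q) + (g p - g q).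
  by rewrite opprD addrACA.
rewrite mulrDl; apply: le_trans (ler_normD _ _) _.
by apply: lerD; apply: lip_bound.
Qed.

Lemma lip_add (f g : T -> Y) : Lipb f -> Lipb g ->
  lipnorm d (fun p => f p + g p) <= lipnorm d f + lipnorm d g.
Proof.
move=> Hf Hg; apply: lip_le => p q.
have -> : f p + g p - (f q + g q) = (f p - f q) + (g p - g q).
  by rewrite opprD addrACA.
rewrite mulrDl; apply: le_trans (ler_normD _ _) _.
by apply: lerD; apply: lip_bound.
Qed.

Lemma sub4 (V : zmodType) (a b c e : V) : (a - b) - (c - e) = (a - c) - (b - e).
Proof. by rewrite !opprD addrACA. Qed.

Lemma lipbB (f g : T -> Y) : Lipb f -> Lipb g -> Lipb (f - g).
Proof.
move=> Hf Hg; exists (lipnorm d f + lipnorm d g) => p q.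
have -> : (f - g) p - (f - g) q = (f p - f q) - (g p - g q).
  exact: sub4.
rewrite mulrDl; apply: le_trans (ler_normB _ _) _.
by apply: lerD; apply: lip_bound.
Qed.

Lemma lip_tri (f g : T -> Y) : Lipb f -> Lipb g ->
  lipnorm d f <= lipnorm d g + lipnorm d (f - g).
Proof.
move=> Hf Hg; have Hfg := lipbB Hf Hg; apply: lip_le => p q.
have -> : f p - f q = (g p - g q) + ((f - g) p - (f - g) q).
  by change (f p - f q = (g p - g q) + ((f p - g p) - (f q - g q)));
     rewrite sub4 [RHS]addrC subrK.
rewrite mulrDl; apply: le_trans (ler_normD _ _) _.
by apply: lerD; apply: lip_bound.
Qed.

Lemma lipbZ (f : T -> Y) c : Lipb f -> Lipb (fun p => c *: f p).
Proof.
move=> Hf; exists (`|c| * lipnorm d f) => p q.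
by rewrite -scalerBr normrZ -mulrA ler_wpM2l // lip_bound.
Qed.

Lemma lip_scale (f : T -> Y) c : Lipb f ->
  lipnorm d (fun p => c *: f p) <= `|c| * lipnorm d f.
Proof.
move=> Hf; apply: lip_le => p q.
by rewrite -scalerBr normrZ -mulrA ler_wpM2l // lip_bound.
Qed.

Lemma lipb0 : Lipb (fun _ => 0).
Proof. by exists 0 => p q; rewrite subrr normr0 mul0r. Qed.

Lemma lip0 : lipnorm d (fun _ : T => (0 : Y)) = 0.
Proof.
apply/le_anti; rewrite lip_ge0 ?andbT; last exact: lipb0.
by apply: lip_le => p q; rewrite subrr normr0 mul0r.
Qed.

Lemma NA0 (t0 : T) : NA d t0 (fun _ : T => (0:Y)).
Proof.
split; first by split => //; exact: lipb0.
exists 0; case: hex => p [q pq].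
exists (fun _ => p), (fun _ => q); split => //; split; last by rewrite normr0 lip0.
rewrite subrr scaler0; exact: cvg_cst.
Qed.

Lemma small_case (t0 : T) (f : T -> Y) eps : lipnorm d f < eps ->
  exists g, NA d t0 g /\ lipnorm d (f - g) < eps.
Proof.
move=> h; exists (fun _ => 0); split; first exact: NA0.
have -> : f - (fun _ => 0) = f by apply: funext => x; exact: subr0.
exact: h.
Qed.
End Gen.

Section Comp.
Variables (T1 T2 : Type) (d1 : T1 -> T1 -> RR) (d2 : T2 -> T2 -> RR) (Y : normedModType RR).
Hypothesis hd0 : forall p q, 0 <= d2 p q.
Hypothesis hdp : forall p q, p <> q -> 0 < d2 p q.
Hypothesis hd10 : forall p q, 0 <= d1 p q.
Hypothesis hd1p : forall p q, p <> q -> 0 < d1 p q.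
Hypothesis hex1 : exists p q : T1, p <> q.
Hypothesis hex2 : exists p q : T2, p <> q.
Variable phi : T1 -> T2.
Hypothesis hphi : forall x y, d2 (phi x) (phi y) = d1 x y.

Lemma lipb_comp (f : T2 -> Y) : Lipb d2 f -> Lipb d1 (fun x => f (phi x)).
Proof.
move=> Hf; exists (lipnorm d2 f) => p q; rewrite -hphi.
exact: (lip_bound hd0 hdp hex2).
Qed.

Lemma lip_comp (f : T2 -> Y) : Lipb d2 f ->
  lipnorm d1 (fun x => f (phi x)) <= lipnorm d2 f.
Proof.
move=> Hf; apply: (lip_le hd1p hex1) => p q; rewrite -hphi.
exact: (lip_bound hd0 hdp hex2).
Qed.
End Comp.
Lemma fe1 (R : fieldType) (a b : R) : a != 0 -> b != 0 -> a + b != 0 ->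
  (a + b)^-1 = (1 - b / (a + b)) / a.
Proof. by move=> h1 h2 h3; field; rewrite ?h1 ?h2 ?h3. Qed.
Lemma fe2 (R : fieldType) (a b : R) : a != 0 -> b != 0 -> a + b != 0 ->
  (a + b)^-1 = b / (a + b) / b.
Proof. by move=> h1 h2 h3; field; rewrite ?h1 ?h2 ?h3. Qed.

Section Vec.
Variable Y : normedModType RR.

Lemma decomp (a b : RR) (X Z : Y) : 0 < a -> 0 < b ->
  (a + b)^-1 *: (X - Z) =
  (1 - b / (a + b)) *: (a^-1 *: X) - (b / (a + b)) *: (b^-1 *: Z).
Proof.
move=> a0 b0; rewrite !scalerA scalerBr; congr (_ *: _ - _ *: _).
  have := lt0r_neq0 a0; have := lt0r_neq0 b0; have : a + b != 0 by rewrite lt0r_neq0 // addr_gt0.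
  by move=> *; apply: fe1.
have := lt0r_neq0 a0; have := lt0r_neq0 b0; have : a + b != 0 by rewrite lt0r_neq0 // addr_gt0.
by move=> *; apply: fe2.
Qed.

Lemma estB (vp vq : Y) (t N e : RR) : 0 <= t -> t <= 1 -> 0 <= e -> e < N ->
  `|vp| <= N -> `|vq| <= e ->
  `|((1 - t) *: vp - t *: vq) - vp| <=
     (N + e) / (N - e) * (N - `|(1 - t) *: vp - t *: vq|).
Proof.
move=> t0 t1 e0 eN hp hq.
have -> : (1 - t) *: vp - t *: vq - vp = - (t *: (vp + vq)).
  by rewrite scalerBl scale1r scalerDr opprD -addrA addrC !addrA addrNK addrC.
rewrite normrN normrZ ger0_norm //.
have h1 : `|vp + vq| <= N + e by apply: le_trans (ler_normD _ _) _; exact: lerD.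
have h2 : `|(1 - t) *: vp - t *: vq| <= (1 - t) * N + t * e.
  apply: le_trans (ler_normB _ _) _; rewrite !normrZ !ger0_norm ?subr_ge0 //.
  by apply: lerD; apply: ler_wpM2l; rewrite ?subr_ge0.
have Ne : 0 < N - e by rewrite subr_gt0.
set U := `|(1 - t) *: vp - t *: vq| in h2 *.
have h3 : t * (N - e) <= N - U by lra.
apply: le_trans (ler_wpM2l t0 h1) _.
rewrite -mulrA mulrC; apply: ler_wpM2l; first lra.
by rewrite mulrC ler_pdivlMr.
Qed.
End Vec.
Section MS.
Variables (I : Type) (M : I -> Type) (d : forall i, M i -> M i -> RR)
          (base : forall i, M i).
Hypothesis hmet : forall i, is_metric (@d i).
Hypothesis hI : inhabited I.

Local Notation S := (Defs.msum base).
Local Notation D := (msum_dist d base).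

Definition inj i (x : M i) : S :=
  match pselect (x = base i) with
  | left _ => None
  | right h => Some (exist (fun z : {i : I & M i} => projT2 z <> base (projT1 z))
                         (existT M i x) h)
  end.

Definition proj i (p : S) : M i :=
  match p with
  | None => base i
  | Some s => match pselect (projT1 (sval s) = i) with
              | left e => eq_rect _ M (projT2 (sval s)) i e
              | right _ => base i end
  end.

Definition in_comp i (p : S) : Prop :=
  match p with None => True | Some s => projT1 (sval s) = i end.

Lemma d0 i (x : M i) : d x x = 0.
Proof. by have [_ [H _]] := hmet i; apply/(H x x).2. Qed.
Lemma dge0 i (x y : M i) : 0 <= d x y.
Proof. by have [H _] := hmet i. Qed.
Lemma dsym i (x y : M i) : d x y = d y x.
Proof. by have [_ [_ [H _]]] := hmet i. Qed.
Lemma dtri i (x y z : M i) : d x z <= d x y + d y z.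
Proof. by have [_ [_ [_ H]]] := hmet i. Qed.
Lemma dpos i (x y : M i) : x <> y -> 0 < d x y.
Proof.
move=> xy; rewrite lt0r dge0 andbT; apply/eqP => h.
by have [_ [H _]] := hmet i; apply: xy; apply/(H x y).1.
Qed.

Lemma proj_inj i (x : M i) : proj i (inj x) = x.
Proof.
rewrite /inj; case: pselect => [->//|h] /=.
by case: pselect => [e|/(_ erefl)//]; rewrite (Prop_irrelevance e erefl).
Qed.

Lemma in_comp_inj i (x : M i) : in_comp i (inj x).
Proof. by rewrite /inj; case: pselect. Qed.

Lemma in_comp_None i : in_comp i None.
Proof. by []. Qed.

Lemma inj_proj i p : in_comp i p -> inj (proj i p) = p.
Proof.
case: p => [[[j x] hx]|] /=; last by rewrite /inj; case: pselect.
move=> ji; subst j; case: pselect => [e|/(_ erefl)//].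
rewrite (Prop_irrelevance e erefl) /= /inj; case: pselect => // h.
by rewrite (Prop_irrelevance h hx).
Qed.

Lemma inj_base i : inj (base i) = None.
Proof. by rewrite /inj; case: pselect. Qed.

Lemma pselect_refl (i : I) : pselect (i = i) = left erefl.
Proof.
case: pselect => [e|n]; last by case: (n erefl).
by rewrite (Prop_irrelevance e erefl).
Qed.

Lemma dist_comp i p q : in_comp i p -> in_comp i q -> D p q = d (proj i p) (proj i q).
Proof.
case: p => [[[j x] hx]|]; case: q => [[[k y] hy]|] /=.
- move=> ji ki; subst j k; by rewrite /msum_dist /proj /= !pselect_refl.
- move=> ji _; subst j; by rewrite /msum_dist /proj /= !pselect_refl.
- move=> _ ki; subst k; by rewrite /msum_dist /proj /= !pselect_refl.
- by move=> _ _; rewrite /msum_dist d0.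
Qed.

Lemma dist_inj i (x y : M i) : D (inj x) (inj y) = d x y.
Proof. by rewrite (dist_comp (in_comp_inj x) (in_comp_inj y)) !proj_inj. Qed.

Lemma comp_ex p : exists i, in_comp i p.
Proof.
case: p => [[[j x] hx]|] /=; first by exists j.
by case: hI => i; exists i.
Qed.

Lemma dist_split p q : (exists i, in_comp i p /\ in_comp i q) \/
  (p <> None /\ q <> None /\ D p q = D p None + D None q).
Proof.
case: p => [[[j x] hx]|]; last by have [i hi] := comp_ex q; left; exists i.
case: q => [[[k y] hy]|]; last by left; exists j.
have [jk|jk] := pselect (j = k).
  by subst k; left; exists j.
right; split => //; split => //.
by rewrite /msum_dist /=; case: pselect.
Qed.

Lemma Dge0 p q : 0 <= D p q.
Proof.
case: p => [[[j x] hx]|]; case: q => [[[k y] hy]|] //=; rewrite /msum_dist /=;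
  try case: pselect => ? ; rewrite ?addr_ge0 ?dge0 //.
Qed.

Lemma proj_None i p : in_comp i p -> p <> None -> proj i p <> base i.
Proof. by move=> hp pN e; apply: pN; rewrite -(inj_proj hp) e inj_base. Qed.

Lemma Dpos p q : p <> q -> 0 < D p q.
Proof.
move=> pq; case: (dist_split p q) => [[i [hp hq]]|[pN [qN ->]]].
  rewrite (dist_comp hp hq); apply: dpos => e; apply: pq.
  by rewrite -(inj_proj hp) -(inj_proj hq) e.
have [i hp] := comp_ex p; have [j hq] := comp_ex q.
rewrite (dist_comp hp (in_comp_None i)) (dist_comp (in_comp_None j) hq) /=.
by rewrite addr_gt0 // dpos // => e; [apply: (proj_None hp pN) | apply: (proj_None hq qN)].
Qed.

Lemma glue (Y : normedModType RR) (H : S -> Y) c :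
  (forall i p q, in_comp i p -> in_comp i q -> `|H p - H q| <= c * D p q) ->
  forall p q, `|H p - H q| <= c * D p q.
Proof.
move=> Hc p q; case: (dist_split p q) => [[i [hp hq]]|[pN [qN ->]]].
  exact: Hc hp hq.
have [i hp] := comp_ex p; have [j hq] := comp_ex q.
apply: le_trans (ler_distD (H None) _ _) _.
by rewrite mulrDr lerD // ?(Hc _ _ _ hp) ?(Hc _ _ _ _ hq).
Qed.

Hypothesis hnontriv : forall i, exists x : M i, x <> base i.
Variable Y : normedModType RR.

Lemma hexM i : exists p q : M i, p <> q.
Proof. by have [x hx] := hnontriv i; exists x, (base i). Qed.

Lemma inj_neq i (x : M i) : x <> base i -> inj x <> None.
Proof. by move=> h e; apply: h; rewrite -(proj_inj x) e. Qed.

Lemma hexS : exists p q : S, p <> q.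
Proof.
case: hI => i; have [x hx] := hnontriv i.
by exists (inj x), None; exact: inj_neq.
Qed.

Lemma inj_inj i (x y : M i) : inj x = inj y -> x = y.
Proof. by move=> e; rewrite -(proj_inj x) e proj_inj. Qed.

Lemma proj_notin i p : ~ in_comp i p -> proj i p = base i.
Proof.
case: p => [[[j x] hx]|] //= hn; rewrite /proj /=.
by case: pselect.
Qed.

Lemma comp_uniq i j p : in_comp i p -> in_comp j p -> p <> None -> i = j.
Proof. by case: p => [[[k x] hx]|] //= h1 h2 _; rewrite -h1 -h2. Qed.

Lemma hdpM i : forall p q : M i, p <> q -> 0 < d p q.
Proof. by move=> p q; apply: dpos. Qed.
Lemma hd0M i : forall p q : M i, 0 <= d p q.
Proof. by move=> p q; apply: dge0. Qed.

Lemma dirA : (forall i, NA_dense (@d i) (base i) Y) -> NA_dense D None Y.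
Proof.
move=> Ha F [F0 LF] eps he.
set N := lipnorm D F.
have [Nlt|Nge] := ltP N eps; first exact: (small_case Dge0 Dpos hexS None Nlt).
set δ := eps / 4.
have hδ : 0 < δ by rewrite divr_gt0.
have Lfi i : Lipb (@d i) (fun x => F (inj x)).
  exact: (lipb_comp Dge0 Dpos hexS (@dist_inj i) LF).
have [i0 Hi0] : exists i0, N - δ < lipnorm (@d i0) (fun x => F (inj x)).
  apply/not_existsP => H.
  apply: (ar_contra hδ).
  apply: (lip_le Dpos hexS); apply: glue => i p q hp hq.
  rewrite (dist_comp hp hq) -{1}(inj_proj hp) -{1}(inj_proj hq).
  apply: le_trans (lip_bound (@hd0M i) (@hdpM i) (hexM i) (Lfi i) _ _) _.
  by apply: ler_wpM2r; [exact: dge0 | rewrite leNgt; apply/negP => /H].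
pose f0 : M i0 -> Y := fun x => F (inj x).
have Lf0 : Lip0 (@d i0) (base i0) f0 by split; [rewrite /f0 inj_base | exact: Lfi].
have [g [[[g0 Lg] [y [xs [ys [hne [hcv hy]]]]]] Hfg]] := Ha i0 f0 Lf0 δ hδ.
have Lgb : Lipb (@d i0) g := Lg.
have Lfg : Lipb (@d i0) (f0 - g) := lipbB (@hd0M i0) (@hdpM i0) (hexM i0) (Lfi i0) Lgb.
set a := lipnorm (@d i0) g.
have N0 : 0 < N by apply: lt_le_trans Nge.
have ha : N - 2 * δ < a.
  have := lip_tri (@hd0M i0) (@hdpM i0) (hexM i0) (Lfi i0) Lgb.
  rewrite -/a; move: Hi0 Hfg; rewrite /f0 /δ; move: (lipnorm _ (fun _ => _)) (lipnorm _ (_ - g)) => u v; exact: ar1.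
pose t := (N - 2 * δ) / N.
have htN : t * N = N - 2 * δ by rewrite /t divfK // lt0r_neq0.
have t0 : 0 <= t.
  by rewrite /t divr_ge0 ?(ltW N0) // /δ; apply: ar2.
have t1 : (1 - t) * N = 2 * δ by rewrite mulrBl htN mul1r ar3.
have t1' : 0 <= 1 - t.
  by rewrite -(pmulr_lge0 _ N0) t1; apply: ar4.
pose G : S -> Y := fun p => if pselect (in_comp i0 p) then g (proj i0 p) else t *: F p.
have Gin p : in_comp i0 p -> G p = g (proj i0 p) by rewrite /G; case: pselect.
have Gout j p : in_comp j p -> j <> i0 -> G p = t *: F p.
  move=> hj ji; rewrite /G; case: pselect => // hi.
  have pN : p = None.
    by apply: contrapT => pN; apply: ji; exact: comp_uniq hj hi pN.
  by subst p; rewrite /= F0 scaler0 g0.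
have Ga : forall p q, `|G p - G q| <= a * D p q.
  apply: glue => j p q hp hq; have [ji|ji] := pselect (j = i0).
    subst j; rewrite !Gin // (dist_comp hp hq).
    exact: (lip_bound (@hd0M i0) (@hdpM i0) (hexM i0) Lgb).
  rewrite !(Gout j) // -scalerBr normrZ ger0_norm //.
  apply: le_trans (_ : t * (N * D p q) <= _).
    by apply: ler_wpM2l => //; exact: (lip_bound Dge0 Dpos hexS LF).
  by rewrite mulrA htN; apply: ler_wpM2r; [exact: Dge0 | exact: ltW].
have LG : Lipb D G by exists a.
have hGa : lipnorm D G = a.
  apply/le_anti/andP; split; first exact: (lip_le Dpos hexS Ga).
  have -> : a = lipnorm (@d i0) (fun x => G (inj x)).
    rewrite /a (_ : (fun x => G (inj x)) = g) //.
    by apply: funext => x; rewrite (Gin _ (in_comp_inj x)) proj_inj.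
  exact: (lip_comp Dge0 Dpos (@hdpM i0) (hexM i0) hexS (@dist_inj i0) LG).
exists G; split.
  split; first by split; [rewrite Gin //= | exact: LG].
  exists y, (fun n => inj (xs n)), (fun n => inj (ys n)); split.
    by move=> n /inj_inj; exact: hne.
  split; last by rewrite hGa hy.
  have -> : (fun n => (D (inj (xs n)) (inj (ys n)))^-1 *: (G (inj (xs n)) - G (inj (ys n))))
    = (fun n => (d (xs n) (ys n))^-1 *: (g (xs n) - g (ys n))).
    by apply: funext => n; rewrite !dist_inj (Gin _ (in_comp_inj (xs n))) (Gin _ (in_comp_inj (ys n))) !proj_inj.
  exact: hcv.
apply: le_lt_trans (_ : _ <= 2 * δ) _; last by rewrite /δ; apply: ar6.
apply: (lip_le Dpos hexS); apply: glue => j p q hp hq.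
change (`|(F p - G p) - (F q - G q)| <= 2 * δ * D p q).
have [ji|ji] := pselect (j = i0).
  subst j; rewrite !Gin //.
  have Fp : F p = f0 (proj i0 p) by rewrite /f0 inj_proj.
  have Fq : F q = f0 (proj i0 q) by rewrite /f0 inj_proj.
  rewrite Fp Fq (dist_comp hp hq).
  apply: le_trans (lip_bound (@hd0M i0) (@hdpM i0) (hexM i0) Lfg (proj i0 p) (proj i0 q)) _.
  apply: ler_wpM2r; first exact: dge0.
  exact: ar5 hδ Hfg.
have E : forall x : Y, x - t *: x = (1 - t) *: x by move=> x; rewrite scalerBl scale1r.
rewrite !(Gout j) // !E -scalerBr normrZ ger0_norm //.
apply: le_trans (_ : (1 - t) * (N * D p q) <= _).
  by apply: ler_wpM2l => //; exact: (lip_bound Dge0 Dpos hexS LF).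
by rewrite mulrA t1.
Qed.
Lemma dirB : NA_dense D None Y -> forall i, NA_dense (@d i) (base i) Y.
Proof.
move=> Hb i f [f0 Lf] eps he.
have Lfb : Lipb (@d i) f := Lf.
have [flt|fge] := ltP (lipnorm (@d i) f) eps.
  exact: (small_case (@hd0M i) (@hdpM i) (hexM i) (base i) flt).
pose F : S -> Y := fun p => f (proj i p).
have Fnot p : ~ in_comp i p -> F p = 0 by move=> h; rewrite /F proj_notin.
have FNone : F None = 0 by rewrite /F /= f0.
have Fout j p : in_comp j p -> j <> i -> F p = 0.
  move=> hj ji; have [hi|hi] := pselect (in_comp i p); last exact: Fnot.
  have pN : p = None.
    by apply: contrapT => pN; apply: ji; exact: comp_uniq hj hi pN.
  by subst p.
have LFb : forall p q, `|F p - F q| <= lipnorm (@d i) f * D p q.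
  apply: glue => j p q hp hq; have [ji|ji] := pselect (j = i).
    subst j; rewrite (dist_comp hp hq).
    exact: (lip_bound (@hd0M i) (@hdpM i) (hexM i) Lfb).
  rewrite !(Fout j) // subrr normr0; apply: mulr_ge0; last exact: Dge0.
  exact: (lip_ge0 (@hd0M i) (@hdpM i) (hexM i) Lfb).
have LF : Lip0 D None F by split; [exact: FNone | exists (lipnorm (@d i) f)].
have he3 : 0 < eps / 3 by rewrite divr_gt0.
have [G [[[G0 LG] [y [ps [qs [hne [hcv hy]]]]]] HFG]] := Hb F LF (eps / 3) he3.
have LGb : Lipb D G := LG.
have LFG : Lipb D (F - G) := lipbB Dge0 Dpos hexS LF.2 LGb.
set e' := lipnorm D (F - G) in HFG.
set N := lipnorm D G in hy.
have e'0 : 0 <= e' := lip_ge0 Dge0 Dpos hexS LFG.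
have fF : (fun x => F (inj x)) = f by apply: funext => x; rewrite /F proj_inj.
have hfF : lipnorm (@d i) f <= lipnorm D F.
  have := lip_comp Dge0 Dpos (@hdpM i) (hexM i) hexS (@dist_inj i) LF.2.
  by rewrite fF.
have hFN : lipnorm D F <= N + e' := lip_tri Dge0 Dpos hexS LF.2 LGb.
have NE : e' < N := ar7 he fge hfF hFN HFG.
pose g : M i -> Y := fun x => G (inj x).
have Lgb : Lipb (@d i) g := lipb_comp Dge0 Dpos hexS (@dist_inj i) LGb.
have hgN : lipnorm (@d i) g <= N :=
  lip_comp Dge0 Dpos (@hdpM i) (hexM i) hexS (@dist_inj i) LGb.
pose C := (N + e') / (N - e').
have C0 : 0 <= C by apply: divr_ge0; [apply: addr_ge0 | rewrite subr_ge0 ltW] => //;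
  apply: le_trans e'0 (ltW NE).
have HG : forall p q, `|G p - G q| <= N * D p q := lip_bound Dge0 Dpos hexS LGb.
have HH : forall p q, `|(F p - G p) - (F q - G q)| <= e' * D p q :=
  lip_bound Dge0 Dpos hexS LFG.
have Qle : forall p q, p <> q -> `|(D p q)^-1 *: (G p - G q)| <= N.
  move=> p q pq; rewrite normrZ normfV ger0_norm ?Dge0 // mulrC ler_pdivrMr ?Dpos //; exact: HG.
have Qg : forall x z : M i, x <> z -> `|(d x z)^-1 *: (g x - g z)| <= lipnorm (@d i) g.
  move=> x z xz; rewrite normrZ normfV ger0_norm ?dge0 // mulrC ler_pdivrMr ?dpos //;
  exact: (lip_bound (@hd0M i) (@hdpM i) (hexM i) Lgb x z).
have Qgle : forall x z : M i, x <> z -> `|(d x z)^-1 *: (g x - g z)| <= N.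
  by move=> x z xz; apply: le_trans (Qg _ _ xz) hgN.
have nZ : forall (c k : RR) (v : Y), 0 < c -> `|v| <= k * c -> `|c^-1 *: v| <= k.
  by move=> c k v c0 h; rewrite normrZ normfV (gtr0_norm c0) mulrC ler_pdivrMr.
have claim : forall p q, p <> q -> exists xz : M i * M i, xz.1 <> xz.2 /\
    `|(D p q)^-1 *: (G p - G q) - (d xz.1 xz.2)^-1 *: (g xz.1 - g xz.2)|
      <= C * (N - `|(D p q)^-1 *: (G p - G q)|).
  move=> p q pq.
  have caseD : F p = 0 -> F q = 0 -> exists xz : M i * M i, xz.1 <> xz.2 /\
    `|(D p q)^-1 *: (G p - G q) - (d xz.1 xz.2)^-1 *: (g xz.1 - g xz.2)|
      <= C * (N - `|(D p q)^-1 *: (G p - G q)|).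
    move=> Fp Fq; have [x0 hx0] := hnontriv i; exists (x0, base i); split => //=.
    have hGpq : `|G p - G q| <= e' * D p q.
      by move: (HH p q); rewrite Fp Fq !sub0r opprK addrC -opprB normrN.
    have hu := nZ _ _ _ (Dpos pq) hGpq.
    exact: (ar8 NE e'0 hu (Qgle _ _ hx0) (ler_normB _ _)).
  have GN : G None = 0 := G0.
  have [hpi|hpi] := pselect (in_comp i p); have [hqi|hqi] := pselect (in_comp i q).
  - exists (proj i p, proj i q); split => /=.
      by move=> e; apply: pq; rewrite -(inj_proj hpi) -(inj_proj hqi) e.
    rewrite /g !inj_proj // -(dist_comp hpi hqi) subrr normr0.
    by apply: mulr_ge0 C0 _; rewrite subr_ge0; exact: Qle.
  - have [pN|pN] := pselect (p = None).
      by subst p; apply: caseD; [exact: FNone | exact: Fnot].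
    have qN : q <> None by move=> e; apply: hqi; rewrite e.
    have Dpq : D p q = D p None + D None q.
      case: (dist_split p q) => [[j [hj1 hj2]]|[_ [_ ->]]] //.
      by exfalso; apply: hqi; rewrite (comp_uniq hpi hj1 pN).
    have a0 : 0 < D p None by apply: Dpos.
    have b0 : 0 < D None q by apply: Dpos => e; apply: qN.
    have hvp : `|(D p None)^-1 *: G p| <= N.
      by have := Qle p None pN; rewrite GN subr0.
    have hvq : `|(D None q)^-1 *: G q| <= e'.
      apply: nZ => //; move: (HH None q).
      by rewrite FNone GN (Fnot _ hqi) subrr !sub0r opprK.
    exists (proj i p, base i); split => /=; first exact: proj_None hpi pN.
    have da : d (proj i p) (base i) = D p None by rewrite (dist_comp hpi (in_comp_None i)).
    rewrite /g inj_proj // inj_base GN subr0 da Dpq (decomp _ _ a0 b0).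
    apply: estB => //.
    + by apply: divr_ge0; [exact: ltW | apply: addr_ge0; exact: ltW].
    + by rewrite ler_pdivrMr ?addr_gt0 // mul1r lerDr ltW.
  - have [qN|qN] := pselect (q = None).
      by subst q; apply: caseD; [exact: Fnot | exact: FNone].
    have pN : p <> None by move=> e; apply: hpi; rewrite e.
    have Dpq : D p q = D p None + D None q.
      case: (dist_split p q) => [[j [hj1 hj2]]|[_ [_ ->]]] //.
      by exfalso; apply: hpi; rewrite (comp_uniq hqi hj2 qN).
    have a0 : 0 < D p None by apply: Dpos.
    have b0 : 0 < D None q by apply: Dpos => e; apply: qN.
    have hvp : `|(D None q)^-1 *: - G q| <= N.
      by have := Qle None q (fun e => qN (esym e)); rewrite GN sub0r.
    have hvq : `|(D p None)^-1 *: - G p| <= e'.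
      apply: nZ => //; move: (HH p None).
      by rewrite FNone GN (Fnot _ hpi) subrr sub0r subr0.
    exists (base i, proj i q); split => /=.
      by move=> e; exact: (proj_None hqi qN (esym e)).
    have db : d (base i) (proj i q) = D None q by rewrite (dist_comp (in_comp_None i) hqi).
    have Eu : (D p q)^-1 *: (G p - G q) =
      (1 - D p None / (D None q + D p None)) *: ((D None q)^-1 *: - G q)
        - (D p None / (D None q + D p None)) *: ((D p None)^-1 *: - G p).
      rewrite -decomp //; congr (_ *: _); first by rewrite Dpq addrC.
      by rewrite opprK addrC.
    rewrite /g inj_proj // inj_base GN sub0r db Eu.
    apply: estB => //.
    + by apply: divr_ge0; [exact: ltW | apply: addr_ge0; exact: ltW].
    + by rewrite ler_pdivrMr ?addr_gt0 // mul1r lerDr ltW.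
  - by apply: caseD; exact: Fnot.
have [xz Hxz] := choice (fun n => claim _ _ (hne n)).
have hcvw : (fun n => (d (xz n).1 (xz n).2)^-1 *: (g (xz n).1 - g (xz n).2)) @ \oo --> y.
  apply/cvgrPdist_lt => e e0.
  have e1 : 0 < e / (1 + C) by rewrite divr_gt0 // ltr_wpDr.
  have := hcv; move/cvgrPdist_lt => /(_ _ e1).
  apply: filterS => n hn.
  have [_ hb] := Hxz n.
  apply: (ar9 C0 (ler_distD ((D (ps n) (qs n))^-1 *: (G (ps n) - G (qs n))) _ _) hb _ hn).
  by rewrite -hy; exact: lerB_dist.
exists g; split.
  split; first by split; [rewrite /g inj_base | exact: Lgb].
  exists y, (fun n => (xz n).1), (fun n => (xz n).2); split.
    by move=> n; have [] := Hxz n.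
  split; first exact: hcvw.
  apply/le_anti/andP; split; last by rewrite hy.
  rewrite leNgt; apply/negP => hlt.
  have := hcvw; move/cvgrPdist_lt => /(_ _ (ar11 hlt)).
  move/filter_ex => [n hn].
  have [hn1 _] := Hxz n.
  exact: (ar12 (lerB_dist _ _) (Qg _ _ hn1) hn).
have fg : f - g = (fun x => (F - G) (inj x)).
  apply: funext => x; change (f x - G (inj x) = F (inj x) - G (inj x)).
  by rewrite /F proj_inj.
rewrite fg; apply: le_lt_trans (lip_comp Dge0 Dpos (@hdpM i) (hexM i) hexS (@dist_inj i) LFG) _.
exact: lt_trans HFG (ar10 he).
Qed.

End MS.

Theorem theorem3p5 (I : Type) (M : I -> Type)
    (d : forall i, M i -> M i -> RR) (base : forall i, M i)
    (Y : completeNormedModType RR)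
    (hmet : forall i, is_metric (d i))
    (hcomp : forall i, is_complete (d i))
    (hnontriv : forall i, exists x : M i, x <> base i)
    (hI : inhabited I) :
  (forall i, NA_dense (d i) (base i) Y) <->
  NA_dense (msum_dist d base) (msum_base base) Y.
Proof.
split.
  exact: (dirA hmet hI hnontriv).
exact: (dirB hmet hI hnontriv).
Qed.
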